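(* Let $s_k, y_k \in \mathbb{R}^n$ be vectors with $y_k^{T}s_k \neq 0$, and define $$H_{k+1} = I - \frac{y_k s_k^{T} + s_k y_k^{T}}{y_k^{T}s_k} + 2\,\frac{y_k^{T}y_k}{(y_k^{T}s_k)^2}\, s_k s_k^{T}.$$ Then $H_{k+1}$ is symmetric positive definite and all of its eigenvalues are greater than $1/2$.
   Context: $I$ denotes the $n\times n$ identity matrix and $\|\cdot\|$ the Euclidean norm. In the paper, $s_k = x_{k+1}-x_k$ and $y_k = \nabla f(x_{k+1}) - \nabla f(x_k)$, but the claim is purely algebraic in $s_k, y_k$. *)

(* Defs.v *)
From HB Require Import structures.
From mathcomp Require Import all_boot all_order all_algebra.
From mathcomp Require Export reals.
Set Implicit Arguments. Unset Strict Implicit. Unset Printing Implicit Defensive.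
Import Order.TTheory GRing.Theory Num.Theory.
Local Open Scope ring_scope.

Definition dotv (R : realType) (n : nat) (u v : 'cV[R]_n) : R := (u^T *m v) 0 0.

Definition Hnext (R : realType) (n : nat) (s y : 'cV[R]_n) : 'M[R]_n :=
  1%:M - (dotv y s)^-1 *: (y *m s^T + s *m y^T)
       + (2 * dotv y y / (dotv y s) ^+ 2) *: (s *m s^T).

Definition spd (R : realType) (n : nat) (H : 'M[R]_n) : Prop :=
  H^T = H /\ forall x : 'cV[R]_n, x != 0 -> 0 < (x^T *m H *m x) 0 0.

(* Main.v *)
Require Import Defs.
From HB Require Import structures.
From mathcomp Require Import all_boot all_order all_algebra.
From mathcomp Require Import reals.
From mathcomp Require Import ring lra.
Import Order.TTheory GRing.Theory Num.Theory.
Local Open Scope ring_scope.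

Section S.
Variables (R : realType) (n : nat).
Implicit Types u v w x : 'cV[R]_n.

Lemma dotvE u v : dotv u v = \sum_i u i 0 * v i 0.
Proof. by rewrite /dotv mxE; apply: eq_bigr => i _; rewrite mxE. Qed.

Lemma dotvC u v : dotv u v = dotv v u.
Proof. by rewrite !dotvE; apply: eq_bigr => i _; rewrite mulrC. Qed.

Lemma dotv_mx u v : u^T *m v = (dotv u v)%:M.
Proof. exact: mx11_scalar. Qed.

Lemma dotvDl u v w : dotv (u + v) w = dotv u w + dotv v w.
Proof. by rewrite /dotv linearD /= mulmxDl mxE. Qed.
Lemma dotvZl (k : R) u w : dotv (k *: u) w = k * dotv u w.
Proof. by rewrite /dotv linearZ /= -scalemxAl mxE. Qed.
Lemma dotvNl u w : dotv (- u) w = - dotv u w.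
Proof. by rewrite -scaleN1r dotvZl mulN1r. Qed.

Lemma dotv_ge0 u : 0 <= dotv u u.
Proof. by rewrite dotvE; apply: sumr_ge0 => i _; rewrite -expr2 sqr_ge0. Qed.

Lemma dotv_gt0 u : u != 0 -> 0 < dotv u u.
Proof.
move=> nz; rewrite lt_def dotv_ge0 andbT; apply/negP => /eqP H.
move: nz; rewrite dotvE in H; apply/negP; rewrite negbK; apply/eqP/matrixP => i j.
rewrite ord1 mxE.
have H2 : \sum_k u k 0 ^+ 2 = 0.
  by rewrite -[RHS]H; apply: eq_bigr => k _; rewrite expr2.
have := @psumr_eq0P _ _ xpredT (fun k => u k 0 ^+ 2) (fun k _ => sqr_ge0 _) H2 i isT.
by move/eqP; rewrite sqrf_eq0 => /eqP.
Qed.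

Lemma quadE x s y : (x^T *m Hnext s y *m x) 0 0 =
  dotv x x - 2 * (dotv y s)^-1 * dotv x y * dotv x s
  + 2 * dotv y y / (dotv y s)^+2 * dotv x s ^+ 2.
Proof.
rewrite /Hnext !(mulmxDr, mulmxBr, mulmxDl, mulmxBl, mulmxN, mulNmx) mulmx1 -!scalemxAr -!scalemxAl !(mulmxDl, mulmxDr).
rewrite !mulmxA !dotv_mx -!mulmxA !dotv_mx -!scalar_mxM.
rewrite !mxE /= !mulr1n (dotvC s x) (dotvC y x); ring.
Qed.


Lemma key x s y : dotv y s != 0 -> x != 0 ->
  dotv x x / 2 < (x^T *m Hnext s y *m x) 0 0.
Proof.
move=> a0 x0; rewrite quadE.
set a := dotv y s; set t := dotv x s / a.
pose z := x - (2 * t) *: y.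
have E : dotv z z = dotv x x - 4 * t * dotv x y + 4 * t ^+ 2 * dotv y y.
  rewrite /z dotvDl dotvNl dotvZl (dotvC x (x - _)) (dotvC y (x - _)).
  rewrite !dotvDl !dotvNl !dotvZl (dotvC y x); ring.
have z0 : z != 0.
  apply/negP => /eqP zE.
  have xE : x = (2 * t) *: y by apply/eqP; rewrite -subr_eq0 -/z zE.
  have : dotv x s = 2 * dotv x s.
    by rewrite {1}xE dotvZl -/a /t; field.
  move=> h; have hs : dotv x s = 0 by lra.
  by move: x0; rewrite xE /t hs mul0r mulr0 scale0r eqxx.
have := @dotv_gt0 z z0; rewrite E /t => h.
have -> : dotv x x - 2 * a^-1 * dotv x y * dotv x s
  + 2 * dotv y y / a ^+ 2 * dotv x s ^+ 2 =
  dotv x x / 2 + (dotv x x - 4 * (dotv x s / a) * dotv x y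
  + 4 * (dotv x s / a) ^+ 2 * dotv y y) / 2 by field.
lra.
Qed.

Lemma Hsym (s y : 'cV[R]_n) : (Hnext s y)^T = Hnext s y.
Proof.
rewrite /Hnext. rewrite !raddfD /= !raddfN /= !linearZ /= tr_scalar_mx.
by rewrite !trmx_mul !trmxK [X in 1%:M + X]addrC.
Qed.

End S.

Theorem lemma1 (R : realType) (n : nat) (s y : 'cV[R]_n) :
  dotv y s != 0 ->
  spd (Hnext s y) /\
  (forall lambda : R, eigenvalue (Hnext s y) lambda -> 1 / 2 < lambda).
Proof.
move=> a0; split.
  rewrite /spd; split; first exact: Hsym.
  move=> x x0; apply: le_lt_trans (@key _ _ x s y a0 x0).
  by apply: divr_ge0 => //; apply: dotv_ge0.
move=> l /eigenvalueP [v vE v0].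
have x0 : v^T != 0 by apply: contra v0 => /eqP h; rewrite -(trmxK v) h linear0.
have := @key _ _ _ s y a0 x0.
have -> : (v^T^T *m Hnext s y *m v^T) = l *: (v^T^T *m v^T).
  by rewrite trmxK vE scalemxAl.
rewrite mxE -/(dotv _ _) => h.
have := @dotv_gt0 _ _ _ x0 => p.
rewrite mul1r.
have : 0 < (l - 1/2) * dotv v^T v^T by lra.
by rewrite pmulr_lgt0 // subr_gt0 mul1r.
Qed.
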